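(* Let $p\in(0,1)$ and let $\Phi,\phi$ be the standard normal c.d.f. and p.d.f. For $k\in\mathbb{N}$ let $h_k^{(1)}(\infty)$ be the unique real solution $h$ of $\int_{-\infty}^{\infty}\Phi^k(t+h)\phi(t)\,dt=p$ and let $h_k^{(2)}(\infty)$ be the unique real solution $h$ of $\Big[\int_{-\infty}^{\infty}\Phi(t+h)\phi(t)\,dt\Big]^k=p$. Then, as $k\to\infty$, $h_k^{(2)}(\infty)\sim\sqrt2\,h_k^{(1)}(\infty)\sim2\sqrt{\ln(k)}$.
   Context: $a_k\sim b_k$ means $a_k/b_k\to1$ as $k\to\infty$. These are the analogues, for Student's $t$ with $\nu=\infty$ degrees of freedom (i.e. the standard normal), of the constants of Dudewicz–Dalal's and Rinott's two-stage selection procedures. *)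

(* Defs.v *)
From Stdlib Require Import Reals.
From Coquelicot Require Import Coquelicot.
Open Scope R_scope.

Definition phi (t : R) : R := exp (- t ^ 2 / 2) / sqrt (2 * PI).

Definition Phi (x : R) : R := RInt_gen phi (Rbar_locally m_infty) (at_point x).

Definition integral_R (f : R -> R) : R :=
  RInt_gen f (Rbar_locally m_infty) (Rbar_locally p_infty).

(* Main.v *)
Require Import Defs.
From Stdlib Require Import Reals.
From Coquelicot Require Import Coquelicot.
From Stdlib Require Import Lra Psatz FunctionalExtensionality.
Open Scope R_scope.

Lemma ex_RInt_cont (f : R -> R) a b : (forall z, continuous f z) -> ex_RInt f a b.
Proof. intros H. apply (@ex_RInt_continuous R_CompleteNormedModule). intros; apply H. Qed.
Lemma RInt_correctR (f : R -> R) a b : ex_RInt f a b -> is_RInt f a b (RInt f a b).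
Proof. intros H. apply (@RInt_correct R_CompleteNormedModule). exact H. Qed.
Lemma cont_of_derive (f : R -> R) x : ex_derive f x -> continuous f x.
Proof. intros H. apply (@ex_derive_continuous R_AbsRing R_NormedModule). exact H. Qed.

Definition gs (t : R) : R := exp (- (t ^ 2)).
Definition GA (x : R) : R := RInt gs 0 x.
Definition Bf (x t : R) : R := exp (- (x ^ 2 * (1 + t ^ 2))) / (1 + t ^ 2).
Definition GB (x : R) : R := RInt (Bf x) 0 1.

Lemma gs_cont : forall x, continuous gs x.
Proof. intros x. apply cont_of_derive. unfold gs. auto_derive. auto. Qed.

Lemma gs_exRInt : forall a b, ex_RInt gs a b.
Proof. intros. apply ex_RInt_cont. intros; apply gs_cont. Qed.

Lemma GA_deriv : forall x, is_derive GA x (gs x).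
Proof.
  intros x. apply (is_derive_RInt gs GA 0).
  - apply filter_forall. intros b. apply RInt_correctR. apply gs_exRInt.
  - apply gs_cont.
Qed.

Lemma pos1t2 : forall t, 0 < 1 + t ^ 2.
Proof. intros t. nra. Qed.

Lemma Bf_cont : forall x t, continuous (Bf x) t.
Proof. intros x t. apply cont_of_derive. unfold Bf. auto_derive.
  pose proof (pos1t2 t). lra. Qed.

Definition dB (u v : R) := -2 * u * exp (- (u ^ 2 * (1 + v ^ 2))).

Lemma Bf_deriv : forall u v, is_derive (fun z => Bf z v) u (dB u v).
Proof. intros u v. unfold Bf, dB. auto_derive.
  - pose proof (pos1t2 v). lra.
  - replace (- (u * (u * 1) * (1 + v * (v * 1)))) with (- (u ^ 2 * (1 + v ^ 2))) by ring.
    pose proof (pos1t2 v). field. lra. Qed.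

Lemma dB_cont : forall x t, continuity_2d_pt dB x t.
Proof.
  intros x t. unfold dB.
  apply continuity_2d_pt_mult.
  - apply continuity_2d_pt_mult. apply continuity_2d_pt_const. apply continuity_2d_pt_id1.
  - apply continuity_2d_pt_filterlim.
    eapply (filterlim_comp _ _ _ (fun z => - (fst z ^ 2 * (1 + snd z ^ 2))) exp).
    + apply (continuity_2d_pt_filterlim (fun u v => - (u ^ 2 * (1 + v ^ 2)))).
      apply continuity_2d_pt_opp.
      apply continuity_2d_pt_ext with (f := fun u v => (u * u) * (1 + v * v)).
      { intros; ring. }
      apply continuity_2d_pt_mult.
      * apply continuity_2d_pt_mult; apply continuity_2d_pt_id1.
      * apply continuity_2d_pt_plus. apply continuity_2d_pt_const.
        apply continuity_2d_pt_mult; apply continuity_2d_pt_id2.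
    + apply cont_of_derive. auto_derive. auto.
Qed.

Lemma GB_deriv : forall x, is_derive GB x (-2 * gs x * GA x).
Proof.
  intros x.
  assert (H := is_derive_RInt_param Bf 0 1 x).
  unfold GB.
  replace (-2 * gs x * GA x) with (RInt (fun t => Derive (fun u => Bf u t) x) 0 1).
  - apply H.
    + apply filter_forall. intros y t _. eexists. apply Bf_deriv.
    + intros t _. apply continuity_2d_pt_ext with (f := dB).
      { intros. symmetry. apply is_derive_unique. apply Bf_deriv. }
      apply dB_cont.
    + apply filter_forall. intros y. apply ex_RInt_cont. intros; apply Bf_cont.
  - rewrite (RInt_ext _ (fun t => scal (-2 * gs x) (scal x (gs (x * t + 0))))).
    2:{ intros t _. replace (Derive (fun u => Bf u t) x) with (dB x t).
        2:{ symmetry. apply is_derive_unique. apply Bf_deriv. }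
        unfold dB, gs, scal; simpl; unfold mult; simpl.
        replace (exp (- (x * (x * 1) * (1 + t * (t * 1))))) with (exp (- (x*(x*1))) * exp (- ((x * t + 0) * ((x * t + 0) * 1)))) by (rewrite <- exp_plus; f_equal; ring). ring. }
    rewrite (@RInt_scal R_CompleteNormedModule).
    2:{ apply ex_RInt_cont. intros z. apply cont_of_derive.
        unfold gs, scal; simpl; unfold mult; simpl. auto_derive. auto. }
    rewrite (@RInt_comp_lin R_CompleteNormedModule). 2: apply gs_exRInt.
    unfold GA, scal; simpl; unfold mult; simpl. f_equal. f_equal; ring.
Qed.

Lemma exp_le_exp : forall x y, x <= y -> exp x <= exp y.
Proof. intros x y [H|H]. apply Rlt_le, exp_increasing; auto. subst; lra. Qed.

Lemma deriv_zero_const (f : R -> R) : (forall x, is_derive f x 0) -> forall x, f x = f 0.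
Proof.
  intros H x.
  assert (Hi := @is_RInt_derive R_CompleteNormedModule f (fun _ => 0) 0 x
                  (fun y _ => H y) (fun y _ => continuous_const _ y)).
  assert (Hc := @is_RInt_const R_NormedModule 0 x 0).
  assert (E := is_RInt_unique _ _ _ _ Hi). 
  rewrite (is_RInt_unique _ _ _ _ Hc) in E.
  unfold minus, plus, opp, scal in E; simpl in E. unfold mult in E; simpl in E.
  unfold Rminus. lra.
Qed.

Lemma GD_const : forall x, GA x ^ 2 + GB x = PI / 4.
Proof.
  assert (H : forall x, is_derive (fun x => GA x ^ 2 + GB x) x 0).
  { intros x.
    replace 0 with (INR 2 * gs x * GA x ^ Init.Nat.pred 2 + (-2 * gs x * GA x)) by (simpl; ring).
    apply (@is_derive_plus R_AbsRing R_NormedModule).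
    - apply (is_derive_pow GA 2 x (gs x)). apply GA_deriv.
    - apply GB_deriv. }
  intros x. rewrite (deriv_zero_const _ H x).
  unfold GA, GB. rewrite RInt_point. 
  rewrite (RInt_ext _ (fun t => / (1 + t ^ 2))).
  2:{ intros t _. unfold Bf. replace (- (0 ^ 2 * (1 + t ^ 2))) with 0 by ring. rewrite exp_0.
      unfold Rdiv. apply Rmult_1_l. }
  assert (Hi := @is_RInt_derive R_CompleteNormedModule atan (fun t => / (1 + t ^ 2)) 0 1).
  assert (Hd : forall y, Rmin 0 1 <= y <= Rmax 0 1 -> is_derive atan y (/ (1 + y ^ 2))).
  { intros y _. replace (1 + y ^ 2) with (1 + y²) by (unfold Rsqr; ring). apply is_derive_atan. }
  assert (Hc : forall y, Rmin 0 1 <= y <= Rmax 0 1 -> continuous (fun t => / (1 + t ^ 2)) y).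
  { intros y _. apply cont_of_derive. auto_derive. pose proof (pos1t2 y). lra. }
  rewrite (is_RInt_unique _ _ _ _ (Hi Hd Hc)).
  rewrite atan_1, atan_0. unfold zero, minus, plus, opp; simpl. ring.
Qed.

Lemma GB_bounds : forall x, 0 <= GB x <= exp (- (x ^ 2)).
Proof.
  intros x. unfold GB. split.
  - apply RInt_ge_0. lra. apply ex_RInt_cont. apply Bf_cont.
    intros t _. unfold Bf. pose proof (pos1t2 t). pose proof (exp_pos (- (x ^ 2 * (1 + t ^ 2)))).
    apply Rlt_le. apply Rdiv_lt_0_compat; lra.
  - replace (exp (- x ^ 2)) with (RInt (fun _ => exp (- (x ^ 2))) 0 1).
    2:{ rewrite RInt_const. unfold scal; simpl; unfold mult; simpl. ring. }
    apply RInt_le. lra. apply ex_RInt_cont. apply Bf_cont. apply ex_RInt_cont. intros; apply continuous_const.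
    intros t Ht. unfold Bf. pose proof (pos1t2 t).
    assert (exp (- (x ^ 2 * (1 + t ^ 2))) <= exp (- x ^ 2)).
    { apply exp_le_exp. nra. }
    assert (1 <= 1 + t ^ 2) by nra.
    apply (Rmult_le_reg_r (1 + t^2)). lra. unfold Rdiv. rewrite Rmult_assoc, Rinv_l by lra.
    pose proof (exp_pos (- x ^ 2)). nra.
Qed.

Lemma GA_nonneg : forall x, 0 <= x -> 0 <= GA x.
Proof. intros x Hx. unfold GA. apply RInt_ge_0. auto. apply gs_exRInt.
  intros; unfold gs; apply Rlt_le, exp_pos. Qed.

Definition sPI := sqrt PI / 2.

Lemma sPI_pos : 0 < sPI.
Proof. unfold sPI. pose proof PI_RGT_0. pose proof (sqrt_lt_R0 PI H). lra. Qed.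

Lemma sPI_sq : sPI ^ 2 = PI / 4.
Proof. unfold sPI. pose proof PI_RGT_0. replace ((sqrt PI / 2) ^ 2) with ((sqrt PI * sqrt PI) / 4) by field.
  rewrite sqrt_sqrt; lra. Qed.

Lemma GA_bounds : forall x, 0 <= x -> 0 <= sPI - GA x <= exp (- (x ^ 2)) / sPI.
Proof.
  intros x Hx. pose proof (GD_const x). pose proof (GB_bounds x). pose proof (GA_nonneg x Hx).
  pose proof sPI_sq. pose proof sPI_pos.
  assert (E : (sPI - GA x) * (sPI + GA x) = GB x) by nra.
  assert (0 <= sPI - GA x) by nra.
  split; auto.
  apply (Rmult_le_reg_r sPI); auto. unfold Rdiv. rewrite Rmult_assoc, Rinv_l by lra. nra.
Qed.

Definition prim (f : R -> R) (x : R) : R := RInt f 0 x.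

Lemma phi_cont : forall x, continuous phi x.
Proof. intros x. apply cont_of_derive. unfold phi. auto_derive.
  pose proof (sqrt_lt_R0 _ Rgt_2PI_0). lra. Qed.

Lemma sq2PI_pos : 0 < sqrt (2 * PI).
Proof. apply sqrt_lt_R0, Rgt_2PI_0. Qed.

Lemma phi_pos : forall x, 0 < phi x.
Proof. intros x. unfold phi. apply Rdiv_lt_0_compat. apply exp_pos. apply sq2PI_pos. Qed.

Lemma phi_even : forall x, phi (- x) = phi x.
Proof. intros x. unfold phi. f_equal. f_equal. f_equal. ring. Qed.

Lemma phi_dec : forall x y, 0 <= x <= y -> phi y <= phi x.
Proof. intros x y H. unfold phi. unfold Rdiv. apply Rmult_le_compat_r.
  apply Rlt_le, Rinv_0_lt_compat, sq2PI_pos. apply exp_le_exp. nra. Qed.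

Lemma phi_le : forall x y, Rabs x <= y -> phi y <= phi x.
Proof. intros x y H. rewrite <- (phi_even x) at 1. destruct (Rle_lt_dec 0 x).
  rewrite Rabs_right in H by lra. rewrite phi_even. apply phi_dec. lra.
  rewrite Rabs_left in H by lra. apply phi_dec. lra. Qed.

Lemma phi_exRInt : forall a b, ex_RInt phi a b.
Proof. intros. apply ex_RInt_cont. apply phi_cont. Qed.

Lemma prim_deriv (f : R -> R) : (forall x, continuous f x) -> forall x, is_derive (prim f) x (f x).
Proof.
  intros Hf x. apply (is_derive_RInt f (prim f) 0).
  - apply filter_forall. intros b. apply RInt_correctR. apply ex_RInt_cont. auto.
  - apply Hf.
Qed.

Lemma prim_phi_GA : forall x, GA (x / sqrt 2) = sqrt PI * prim phi x.
Proof.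
  intros x. unfold GA, prim.
  assert (H2 : 0 < sqrt 2) by (apply sqrt_lt_R0; lra).
  assert (HP : 0 < sqrt PI) by (apply sqrt_lt_R0, PI_RGT_0).
  replace (x / sqrt 2) with (/ sqrt 2 * x + 0) by (field; lra).
  replace 0 with (/ sqrt 2 * 0 + 0) at 1 by ring.
  rewrite <- (@RInt_comp_lin R_CompleteNormedModule). 2: apply gs_exRInt.
  rewrite <- (@RInt_scal R_CompleteNormedModule). 2: apply phi_exRInt.
  apply RInt_ext. intros t _. unfold scal; simpl; unfold mult; simpl.
  unfold gs, phi. rewrite sqrt_mult by (pose proof PI_RGT_0; lra).
  replace (- (/ sqrt 2 * t + 0) ^ 2) with (- t ^ 2 / 2).
  - field. lra.
  - replace ((/ sqrt 2 * t + 0) ^ 2) with (t ^ 2 / (sqrt 2 * sqrt 2)) by (field; lra).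
    rewrite sqrt_sqrt by lra. field.
Qed.

Lemma prim_phi_odd : forall x, prim phi (- x) = - prim phi x.
Proof.
  intros x. unfold prim.
  replace (- x) with (-1 * x + 0) by ring.
  replace 0 with (-1 * 0 + 0) at 1 by ring.
  rewrite <- (@RInt_comp_lin R_CompleteNormedModule). 2: apply phi_exRInt.
  replace (- RInt phi 0 x) with (scal (-1) (RInt phi 0 x)).
  2:{ unfold scal; simpl; unfold mult; simpl. ring. }
  rewrite <- (@RInt_scal R_CompleteNormedModule). 2: apply phi_exRInt.
  apply RInt_ext. intros t _. f_equal. replace (-1 * t + 0) with (- t) by ring. apply phi_even.
Qed.

Definition Qt (x : R) : R := 1 / 2 - prim phi x.

Lemma Qt_bounds_pos : forall x, 0 <= x -> 0 <= Qt x <= exp (- x ^ 2 / 2).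
Proof.
  intros x Hx.
  assert (H2 : 0 < sqrt 2) by (apply sqrt_lt_R0; lra).
  assert (HP : 0 < sqrt PI) by (apply sqrt_lt_R0, PI_RGT_0).
  assert (E : Qt x = (sPI - GA (x / sqrt 2)) / sqrt PI).
  { rewrite prim_phi_GA. unfold Qt, sPI. field. lra. }
  assert (Hx2 : 0 <= x / sqrt 2) by (apply Rdiv_le_0_compat; lra).
  destruct (GA_bounds _ Hx2) as [B1 B2].
  assert (Ee : (x / sqrt 2) ^ 2 = x ^ 2 / 2).
  { replace ((x / sqrt 2) ^ 2) with (x ^ 2 / (sqrt 2 * sqrt 2)) by (field; lra).
    rewrite sqrt_sqrt by lra. reflexivity. }
  rewrite Ee in B2. rewrite E. split.
  - apply Rdiv_le_0_compat; lra.
  - assert (sPI * sqrt PI = PI / 2).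
    { unfold sPI. replace (sqrt PI / 2 * sqrt PI) with (sqrt PI * sqrt PI / 2) by field.
      rewrite sqrt_sqrt. reflexivity. pose proof PI_RGT_0; lra. }
    pose proof sPI_pos. pose proof PI2_3_2.
    pose proof (exp_pos (- x ^ 2 / 2)).
    replace (- x ^ 2 / 2) with (- (x ^ 2 / 2)) by field.
    apply (Rmult_le_reg_r (sqrt PI)). auto. unfold Rdiv at 1. rewrite Rmult_assoc, Rinv_l by lra.
    rewrite Rmult_1_r.
    replace (- (x ^ 2 / 2)) with (- x ^ 2 / 2) by field.
    apply (Rle_trans _ _ _ B2).
    apply (Rmult_le_reg_r sPI). auto. unfold Rdiv. rewrite Rmult_assoc, Rinv_l by lra.
    replace (- (x ^ 2 * / 2)) with (- x ^ 2 * / 2) by field. rewrite Rmult_assoc, (Rmult_comm (sqrt PI)), H. nra.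
Qed.

Lemma Qt_odd : forall x, Qt (- x) = 1 - Qt x.
Proof. intros x. unfold Qt. rewrite prim_phi_odd. lra. Qed.

Lemma Qt_range : forall x, 0 <= Qt x <= 1.
Proof.
  intros x. destruct (Rle_lt_dec 0 x).
  - destruct (Qt_bounds_pos x r). split; auto.
    pose proof (exp_pos (- x^2/2)). unfold Qt in *.
    assert (0 <= prim phi x). { unfold prim. apply RInt_ge_0; auto. apply phi_exRInt.
      intros; apply Rlt_le, phi_pos. }
    lra.
  - replace x with (- - x) by ring. rewrite Qt_odd. destruct (Qt_bounds_pos (- x)). lra.
    split. 2: lra.
    assert (0 <= prim phi (-x)). { unfold prim. apply RInt_ge_0; try lra. apply phi_exRInt.
      intros; apply Rlt_le, phi_pos. }
    unfold Qt in *. lra.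
Qed.

Lemma exp_small : forall x, 0 < x -> exp (- x ^ 2 / 2) < / x.
Proof.
  intros x Hx. pose proof (exp_ineq1_le (x ^ 2 / 2)).
  replace (- x ^ 2 / 2) with (- (x ^ 2 / 2)) by field. rewrite exp_Ropp.
  apply Rinv_lt_contravar. pose proof (exp_pos (x^2/2)). nra. nra.
Qed.

Lemma lim_p_exp (f : R -> R) l : (forall x, 0 < x -> Rabs (f x - l) <= exp (- x ^ 2 / 2)) ->
  is_lim f p_infty l.
Proof.
  intros H. apply is_lim_spec. intros eps. simpl. exists (/ eps). intros x Hx.
  pose proof (cond_pos eps). assert (0 < / eps) by (apply Rinv_0_lt_compat; auto).
  assert (0 < x) by lra.
  eapply Rle_lt_trans. apply H. auto. eapply Rlt_trans. apply exp_small. auto.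
  replace (pos eps) with (/ / eps) by (field; lra). apply Rinv_lt_contravar; nra.
Qed.

Lemma lim_m_exp (f : R -> R) l : (forall x, x < 0 -> Rabs (f x - l) <= exp (- x ^ 2 / 2)) ->
  is_lim f m_infty l.
Proof.
  intros H. apply is_lim_spec. intros eps. simpl. exists (- / eps). intros x Hx.
  pose proof (cond_pos eps). assert (0 < / eps) by (apply Rinv_0_lt_compat; auto).
  assert (0 < - x) by lra.
  eapply Rle_lt_trans. apply H. lra. replace (- x ^ 2 / 2) with (- (- x) ^ 2 / 2) by field.
  eapply Rlt_trans. apply exp_small. auto.
  replace (pos eps) with (/ / eps) by (field; lra). apply Rinv_lt_contravar; nra.
Qed.

Lemma prim_phi_lim_p : is_lim (prim phi) p_infty (1 / 2).
Proof. apply lim_p_exp. intros x Hx. destruct (Qt_bounds_pos x) as [A B]. lra.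
  unfold Qt in *. rewrite Rabs_left1 by lra. lra. Qed.

Lemma prim_phi_lim_m : is_lim (prim phi) m_infty (- (1 / 2)).
Proof. apply lim_m_exp. intros x Hx. destruct (Qt_bounds_pos (- x)) as [A B]. lra.
  rewrite Qt_odd in A, B. unfold Qt in *. replace ((-x)^2) with (x^2) in B by ring.
  rewrite Rabs_right by lra. lra. Qed.

Lemma at_point_lim (f : R -> R) x : filterlim f (at_point x) (locally (f x)).
Proof. intros P HP. unfold filtermap, at_point. apply locally_singleton. auto. Qed.

Lemma Phi_eq : forall x, Phi x = 1 / 2 + prim phi x.
Proof.
  intros x. unfold Phi.
  assert (Hd : forall y, is_derive (prim phi) y (phi y)) by (apply prim_deriv, phi_cont).
  assert (HD : forall y, Derive (prim phi) y = phi y) by (intros; apply is_derive_unique, Hd).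
  assert (H := is_RInt_gen_Derive (Fa := Rbar_locally m_infty) (Fb := at_point x) (prim phi) (- (1/2)) (prim phi x)).
  apply (is_RInt_gen_unique (Fa := Rbar_locally m_infty) (Fb := at_point x)).
  replace (1 / 2 + prim phi x) with (prim phi x - - (1/2)) by ring.
  apply (is_RInt_gen_ext (Derive (prim phi))).
  - apply filter_forall. intros ab y _. apply HD.
  - apply H.
  + apply filter_forall. intros ab y _. eexists; apply Hd.
  + apply filter_forall. intros ab y _. apply (continuous_ext phi). intros; symmetry; apply HD. apply phi_cont.
  + apply prim_phi_lim_m.
  + apply at_point_lim.
Qed.

Lemma Phi_Qt : forall x, Phi x = 1 - Qt x.
Proof. intros x. rewrite Phi_eq. unfold Qt. lra. Qed.

Definition IntR (f : R -> R) (L : R) : Prop :=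
  (forall x, continuous f x) /\
  exists Lp Lm : R, is_lim (prim f) p_infty Lp /\ is_lim (prim f) m_infty Lm /\ L = Lp - Lm.

Lemma RInt_Chasles_R (f:R->R) a b c : ex_RInt f a b -> ex_RInt f b c -> RInt f a b + RInt f b c = RInt f a c.
Proof. intros. apply (@RInt_Chasles R_CompleteNormedModule); auto. Qed.

Lemma prim0 f : prim f 0 = 0.
Proof. unfold prim. apply (@RInt_point R_CompleteNormedModule). Qed.

Lemma IntR_integral f L : IntR f L -> integral_R f = L.
Proof.
  intros [Hc [Lp [Lm [Hp [Hm E]]]]]. subst L. unfold integral_R.
  assert (Hd : forall y, is_derive (prim f) y (f y)) by (apply prim_deriv, Hc).
  assert (HD : forall y, Derive (prim f) y = f y) by (intros; apply is_derive_unique, Hd).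
  assert (H := is_RInt_gen_Derive (Fa := Rbar_locally m_infty) (Fb := Rbar_locally p_infty) (prim f) Lm Lp).
  apply (is_RInt_gen_unique (Fa := Rbar_locally m_infty) (Fb := Rbar_locally p_infty)).
  apply (is_RInt_gen_ext (Derive (prim f))).
  - apply filter_forall. intros ab y _. apply HD.
  - apply H.
  + apply filter_forall. intros ab y _. eexists; apply Hd.
  + apply filter_forall. intros ab y _. apply (continuous_ext f). intros; symmetry; apply HD. apply Hc.
  + apply Hm.
  + apply Hp.
Qed.

Lemma IntR_phi : IntR phi 1.
Proof.
  split. apply phi_cont. exists (1/2), (-(1/2)). split. apply prim_phi_lim_p.
  split. apply prim_phi_lim_m. field.
Qed.

Lemma cont_plus (f g : R -> R) x : continuous f x -> continuous g x -> continuous (fun t => f t + g t) x.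
Proof. intros. apply (@continuous_plus R_UniformSpace R_AbsRing R_NormedModule); auto. Qed.
Lemma cont_mult (f g : R -> R) x : continuous f x -> continuous g x -> continuous (fun t => f t * g t) x.
Proof. intros. apply (@continuous_mult R_UniformSpace R_AbsRing); auto. Qed.
Lemma cont_const (c : R) x : continuous (fun _ : R => c) x.
Proof. apply continuous_const. Qed.
Lemma cont_opp (f : R -> R) x : continuous f x -> continuous (fun t => - f t) x.
Proof. intros. apply (@continuous_opp R_UniformSpace R_AbsRing R_NormedModule); auto. Qed.
Lemma cont_comp (f g : R -> R) x : continuous f x -> continuous g (f x) -> continuous (fun t => g (f t)) x.
Proof. intros. apply (@continuous_comp R_UniformSpace R_UniformSpace R_UniformSpace); auto. Qed.
Lemma cont_shift (f : R -> R) s x : continuous f (x + s) -> continuous (fun t => f (t + s)) x.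
Proof. intros. apply cont_comp; auto. apply cont_of_derive. auto_derive. auto. Qed.
Lemma cont_pow (f : R -> R) n x : continuous f x -> continuous (fun t => f t ^ n) x.
Proof. intros H. induction n. simpl. apply cont_const. simpl. apply cont_mult; auto. Qed.

Lemma IntR_plus f g a b : IntR f a -> IntR g b -> IntR (fun t => f t + g t) (a + b).
Proof.
  intros [Hf [fp [fm [Hfp [Hfm Ef]]]]] [Hg [gp [gm [Hgp [Hgm Eg]]]]].
  split. intros; apply cont_plus; auto.
  assert (E : forall x, prim f x + prim g x = prim (fun t => f t + g t) x).
  { intros x. unfold prim. symmetry. apply (@RInt_plus R_CompleteNormedModule);
    apply ex_RInt_cont; auto. }
  exists (fp + gp), (fm + gm). split; [|split].
  - eapply is_lim_ext. apply E. apply is_lim_plus'; auto.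
  - eapply is_lim_ext. apply E. apply is_lim_plus'; auto.
  - subst; ring.
Qed.

Lemma IntR_scal f c a : IntR f a -> IntR (fun t => c * f t) (c * a).
Proof.
  intros [Hf [fp [fm [Hfp [Hfm Ef]]]]].
  split. intros; apply cont_mult; auto. apply cont_const.
  assert (E : forall x, c * prim f x = prim (fun t => c * f t) x).
  { intros x. unfold prim. symmetry. apply (@RInt_scal R_CompleteNormedModule);
    apply ex_RInt_cont; auto. }
  exists (c * fp), (c * fm). split; [|split].
  - eapply is_lim_ext. apply E. apply (is_lim_scal_l _ c _ fp); auto.
  - eapply is_lim_ext. apply E. apply (is_lim_scal_l _ c _ fm); auto.
  - subst; ring.
Qed.

Lemma IntR_minus f g a b : IntR f a -> IntR g b -> IntR (fun t => f t - g t) (a - b).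
Proof.
  intros Hf Hg. assert (H := IntR_plus _ _ _ _ Hf (IntR_scal _ (-1) _ Hg)).
  replace (a - b) with (a + -1 * b) by ring.
  replace (fun t => f t - g t) with (fun t => f t + -1 * g t). exact H.
  apply functional_extensionality; intros; ring.
Qed.

Lemma lim_shift_p (u : R -> R) s (l : R) : is_lim u p_infty l -> is_lim (fun x => u (x + s)) p_infty l.
Proof.
  intros H. apply is_lim_spec in H. apply is_lim_spec. intros eps. destruct (H eps) as [M HM].
  exists (M - s). intros x Hx. apply HM. lra.
Qed.
Lemma lim_shift_m (u : R -> R) s (l : R) : is_lim u m_infty l -> is_lim (fun x => u (x + s)) m_infty l.
Proof.
  intros H. apply is_lim_spec in H. apply is_lim_spec. intros eps. destruct (H eps) as [M HM].
  exists (M - s). intros x Hx. apply HM. lra.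
Qed.

Lemma IntR_shift f s a : IntR f a -> IntR (fun t => f (t + s)) a.
Proof.
  intros [Hf [fp [fm [Hfp [Hfm Ef]]]]].
  split. intros; apply cont_shift; auto.
  assert (E : forall x, prim f (x + s) - prim f s = prim (fun t => f (t + s)) x).
  { intros x. unfold prim.
    rewrite <- (RInt_Chasles_R f 0 s (x + s)) by (apply ex_RInt_cont; auto).
        replace (RInt (fun t => f (t + s)) 0 x) with (RInt (fun t => scal 1 (f (1 * t + s))) 0 x).
    rewrite (@RInt_comp_lin R_CompleteNormedModule) by (apply ex_RInt_cont; auto).
    replace (1 * 0 + s) with s by ring. replace (1 * x + s) with (x + s) by ring. ring.
    apply RInt_ext. intros t _. unfold scal; simpl; unfold mult; simpl. rewrite Rmult_1_l, Rmult_1_l. auto. }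
  exists (fp - prim f s), (fm - prim f s). split; [|split].
  - eapply is_lim_ext. apply E. apply is_lim_minus'. apply lim_shift_p; auto. apply is_lim_const.
  - eapply is_lim_ext. apply E. apply is_lim_minus'. apply lim_shift_m; auto. apply is_lim_const.
  - subst; ring.
Qed.

Lemma prim_mono f : (forall x, continuous f x) -> (forall x, 0 <= f x) ->
  forall x y, x <= y -> prim f x <= prim f y.
Proof.
  intros Hc Hp x y Hxy. unfold prim.
  rewrite <- (RInt_Chasles_R f 0 x y) by (apply ex_RInt_cont; auto).
  assert (0 <= RInt f x y). apply RInt_ge_0; auto. apply ex_RInt_cont; auto.
  lra.
Qed.

Lemma mono_le_lim_p (u : R -> R) (l : R) x : (forall a b, a <= b -> u a <= u b) -> is_lim u p_infty l -> u x <= l.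
Proof.
  intros Hm Hl.
  assert (H := filterlim_le (F := Rbar_locally p_infty) (fun _ => u x) u (u x) l).
  simpl in H. apply H.
  - exists x. intros y Hy. apply Hm. lra.
  - apply (is_lim_const (u x) p_infty).
  - apply Hl.
Qed.

Lemma mono_ge_lim_m (u : R -> R) (l : R) x : (forall a b, a <= b -> u a <= u b) -> is_lim u m_infty l -> l <= u x.
Proof.
  intros Hm Hl.
  assert (H := filterlim_le (F := Rbar_locally m_infty) u (fun _ => u x) l (u x)).
  simpl in H. apply H.
  - exists x. intros y Hy. apply Hm. lra.
  - apply Hl.
  - apply (is_lim_const (u x) m_infty).
Qed.

Lemma IntR_RInt_le f L a b : IntR f L -> (forall x, 0 <= f x) -> a <= b -> RInt f a b <= L.
Proof.
  intros [Hf [fp [fm [Hfp [Hfm Ef]]]]] Hp Hab.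
  assert (Hm := prim_mono f Hf Hp).
  assert (H : @eq R (RInt f a b) (prim f b - prim f a)).
  { unfold prim. pose proof (RInt_Chasles_R f 0 a b) as HC.
    assert (HC' : RInt f 0 a + RInt f a b = RInt f 0 b) by (apply HC; apply ex_RInt_cont; auto).
    lra. }
  rewrite H. pose proof (mono_le_lim_p _ _ b Hm Hfp). pose proof (mono_ge_lim_m _ _ a Hm Hfm). lra.
Qed.

Lemma IntR_nonneg f L : IntR f L -> (forall x, 0 <= f x) -> 0 <= L.
Proof. intros H Hp. pose proof (IntR_RInt_le f L 0 0 H Hp (Rle_refl 0)). rewrite RInt_point in H0.
  exact H0. Qed.

Lemma IntR_le f g a b : IntR f a -> IntR g b -> (forall x, f x <= g x) -> a <= b.
Proof.
  intros Hf Hg H. pose proof (IntR_nonneg _ _ (IntR_minus _ _ _ _ Hg Hf)). 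
  assert (0 <= b - a). apply H0. intros x. specialize (H x). lra. lra.
Qed.

Lemma mono_lim_p (u : R -> R) M : (forall a b, a <= b -> u a <= u b) -> (forall x, u x <= M) ->
  exists l : R, is_lim u p_infty l.
Proof.
  intros Hm HM.
  destruct (completeness (fun y => exists x, y = u x)) as [l [Hub Hlub]].
  { exists M. intros y [x ->]. apply HM. }
  { exists (u 0). exists 0. auto. }
  exists l. apply is_lim_spec. intros eps. simpl.
  destruct (Rlt_or_le (l - eps) (l - eps)) as [Hc|_]. lra.
  assert (exists x0, l - eps < u x0).
  { apply Classical_Prop.NNPP. intros Hn.
    assert (l <= l - eps). apply Hlub. intros y [x ->].
    apply Rnot_lt_le. intros Hc. apply Hn. exists x. auto.
    pose proof (cond_pos eps). lra. }
  destruct H as [x0 Hx0]. exists x0. intros x Hx.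
  assert (u x <= l) by (apply Hub; exists x; auto).
  assert (u x0 <= u x) by (apply Hm; lra).
  rewrite Rabs_left1 by lra. lra.
Qed.

Lemma mono_lim_m (u : R -> R) M : (forall a b, a <= b -> u a <= u b) -> (forall x, M <= u x) ->
  exists l : R, is_lim u m_infty l.
Proof.
  intros Hm HM.
  destruct (mono_lim_p (fun x => - u (- x)) (- M)) as [l Hl].
  { intros a b Hab. assert (u (-b) <= u (-a)) by (apply Hm; lra). lra. }
  { intros x. specialize (HM (-x)). lra. }
  exists (- l). apply is_lim_spec in Hl. apply is_lim_spec. intros eps. destruct (Hl eps) as [N HN].
  exists (- N). intros x Hx. specialize (HN (- x)). replace (- - x) with x in HN by ring.
  replace (u x - - l) with (- (- u x - l)) by ring. rewrite Rabs_Ropp. apply HN. lra.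
Qed.

Lemma IntR_dom f g L : (forall x, continuous f x) -> (forall x, 0 <= f x <= g x) -> IntR g L ->
  exists L', IntR f L' /\ L' <= L.
Proof.
  intros Hf Hfg Hg.
  assert (Hp : forall x, 0 <= f x) by (intros x; apply Hfg).
  assert (Hgp : forall x, 0 <= g x) by (intros x; specialize (Hfg x); lra).
  assert (Hm := prim_mono f Hf Hp).
  assert (Hb : forall x, Rabs (prim f x) <= L).
  { intros x. destruct (Rle_lt_dec 0 x).
    - rewrite Rabs_pos_eq by (rewrite <- (prim0 f); apply (Hm 0 x); auto).
      unfold prim. eapply Rle_trans. 2: apply (IntR_RInt_le g L 0 x Hg Hgp r).
      apply RInt_le; auto. apply ex_RInt_cont; auto. apply ex_RInt_cont. apply Hg.
      intros; apply Hfg.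
    - assert (prim f x <= 0) by (rewrite <- (prim0 f); apply (Hm x 0); lra).
      rewrite Rabs_left1 by auto. unfold prim in *.
      rewrite <- opp_RInt_swap by (apply ex_RInt_cont; auto). unfold opp; simpl. rewrite Ropp_involutive.
      eapply Rle_trans. 2: apply (IntR_RInt_le g L x 0 Hg Hgp). 2: lra.
      apply RInt_le; try lra. apply ex_RInt_cont; auto. apply ex_RInt_cont. apply Hg.
      intros; apply Hfg. }
  destruct (mono_lim_p (prim f) L Hm) as [lp Hlp]. { intros x. specialize (Hb x). apply Rabs_le_between in Hb. lra. }
  destruct (mono_lim_m (prim f) (- L) Hm) as [lm Hlm]. { intros x. specialize (Hb x). apply Rabs_le_between in Hb. lra. }
  assert (HI : IntR f (lp - lm)). { split. auto. exists lp, lm. auto. }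
  exists (lp - lm). split. auto. apply (IntR_le f g); auto. intros x; apply Hfg.
Qed.

Lemma Phi_cont : forall x, continuous Phi x.
Proof.
  intros x. apply (continuous_ext (fun y => 1/2 + prim phi y)). intros; symmetry; apply Phi_eq.
  apply cont_plus. apply cont_const. apply cont_of_derive. eexists. apply prim_deriv, phi_cont.
Qed.

Lemma Phi_range : forall x, 0 <= Phi x <= 1.
Proof. intros x. rewrite Phi_Qt. pose proof (Qt_range x). lra. Qed.

Lemma Phi_mono : forall x y, x <= y -> Phi x <= Phi y.
Proof. intros x y H. rewrite !Phi_eq. pose proof (prim_mono phi phi_cont (fun t => Rlt_le _ _ (phi_pos t)) x y H). lra. Qed.

Lemma Qt_anti : forall x y, x <= y -> Qt y <= Qt x.
Proof. intros x y H. pose proof (Phi_mono x y H). rewrite !Phi_Qt in H0. lra. Qed.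

Lemma Qt_lower : forall x, 0 <= x -> phi (x + 1) <= Qt x.
Proof.
  intros x Hx.
  assert (E : Qt x - Qt (x + 1) = RInt phi x (x + 1)).
  { unfold Qt, prim. pose proof (RInt_Chasles_R phi 0 x (x+1) (phi_exRInt _ _) (phi_exRInt _ _)). lra. }
  assert (RInt (fun _ => phi (x + 1)) x (x + 1) <= RInt phi x (x + 1)).
  { apply RInt_le. lra. apply ex_RInt_cont; intros; apply cont_const. apply phi_exRInt.
    intros t Ht. apply phi_dec. lra. }
  rewrite RInt_const in H. unfold scal in H; simpl in H; unfold mult in H; simpl in H.
  replace (x + 1 - x) with 1 in H by ring. pose proof (Qt_range (x+1)). lra.
Qed.

Definition integrand (k : nat) (h t : R) : R := Phi (t + h) ^ k * phi t.

Lemma integrand_cont k h : forall x, continuous (integrand k h) x.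
Proof. intros x. unfold integrand. apply cont_mult. apply cont_pow. apply cont_shift. apply Phi_cont. apply phi_cont. Qed.

Lemma integrand_bounds k h : forall t, 0 <= integrand k h t <= phi t.
Proof.
  intros t. unfold integrand. pose proof (Phi_range (t + h)). pose proof (phi_pos t).
  assert (0 <= Phi (t + h) ^ k <= 1).
  { split. apply pow_le; lra. replace 1 with (1 ^ k) by apply pow1. apply pow_incr. lra. }
  nra.
Qed.

Lemma IntR_integrand k h : IntR (integrand k h) (integral_R (integrand k h)).
Proof.
  destruct (IntR_dom (integrand k h) phi 1 (integrand_cont k h) (integrand_bounds k h) IntR_phi) as [L [HL _]].
  rewrite (IntR_integral _ _ HL). auto.
Qed.

Lemma Gk_mono k h h' : h <= h' -> integral_R (integrand k h) <= integral_R (integrand k h').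
Proof.
  intros H. apply (IntR_le _ _ _ _ (IntR_integrand k h) (IntR_integrand k h')).
  intros t. unfold integrand. apply Rmult_le_compat_r. apply Rlt_le, phi_pos.
  apply pow_incr. split. apply Phi_range. apply Phi_mono. lra.
Qed.

Lemma Gk_lower k h a : 0 <= a ->
  Phi (h - a) ^ k * (prim phi a - prim phi (- a)) <= integral_R (integrand k h).
Proof.
  intros Ha.
  eapply Rle_trans. 2: apply (IntR_RInt_le _ _ (-a) a (IntR_integrand k h)).
  2: apply integrand_bounds. 2: lra.
  assert (E : prim phi a - prim phi (- a) = RInt phi (-a) a).
  { unfold prim. pose proof (RInt_Chasles_R phi 0 (-a) a (phi_exRInt _ _) (phi_exRInt _ _)). lra. }
  rewrite E.
  assert (E2 : Phi (h - a) ^ k * RInt phi (- a) a = RInt (fun t => Phi (h - a) ^ k * phi t) (-a) a).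
  { symmetry. apply (@RInt_scal R_CompleteNormedModule). apply phi_exRInt. }
  rewrite E2. apply RInt_le. lra. apply ex_RInt_cont. intros; apply cont_mult. apply cont_const. apply phi_cont.
  apply ex_RInt_cont. apply integrand_cont.
  intros t Ht. unfold integrand. apply Rmult_le_compat_r. apply Rlt_le, phi_pos.
  apply pow_incr. split. apply Phi_range. apply Phi_mono. lra.
Qed.

Lemma phi_shift_bound a t : a <= t -> phi t <= exp (1 / 2 - a) * phi (t + -1).
Proof.
  intros H. unfold phi. unfold Rdiv. rewrite <- Rmult_assoc. apply Rmult_le_compat_r.
  apply Rlt_le, Rinv_0_lt_compat, sq2PI_pos. rewrite <- exp_plus. apply exp_le_exp. nra.
Qed.

Lemma Gk_upper k h a : integral_R (integrand k h) <= Phi (h + a) ^ k + exp (1 / 2 - a).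
Proof.
  assert (HI : IntR (fun t => Phi (h + a) ^ k * phi t + exp (1 / 2 - a) * phi (t + -1))
                    (Phi (h + a) ^ k * 1 + exp (1 / 2 - a) * 1)).
  { apply IntR_plus; apply IntR_scal. apply IntR_phi. apply (IntR_shift phi (-1)). apply IntR_phi. }
  replace (Phi (h + a) ^ k + exp (1 / 2 - a)) with (Phi (h + a) ^ k * 1 + exp (1 / 2 - a) * 1) by ring.
  apply (IntR_le _ _ _ _ (IntR_integrand k h) HI).
  intros t. unfold integrand. pose proof (phi_pos t). pose proof (phi_pos (t + -1)).
  pose proof (exp_pos (1/2 - a)). pose proof (Phi_range (t + h)). pose proof (Phi_range (h + a)).
  assert (0 <= Phi (h + a) ^ k) by (apply pow_le; lra).
  destruct (Rle_lt_dec t a).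
  - assert (Phi (t + h) ^ k <= Phi (h + a) ^ k).
    { apply pow_incr. split. lra. apply Phi_mono. lra. }
    nra.
  - assert (Phi (t + h) ^ k <= 1).
    { replace 1 with (1 ^ k) by apply pow1. apply pow_incr. lra. }
    pose proof (phi_shift_bound a t). nra.
Qed.

Lemma IntR_q h : IntR (fun t => phi t - integrand 1 h t) (1 - integral_R (integrand 1 h)).
Proof. apply IntR_minus. apply IntR_phi. apply IntR_integrand. Qed.

Lemma q_eq h t : phi t - integrand 1 h t = Qt (t + h) * phi t.
Proof. unfold integrand. rewrite Phi_Qt. ring. Qed.

Lemma F_upper h : 0 <= h -> integral_R (integrand 1 h) <= 1 - phi (h / 2 + 1) ^ 2.
Proof.
  intros Hh.
  assert (H := IntR_RInt_le _ _ (- h / 2 - 1) (- h / 2) (IntR_q h)).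
  assert (Hq : forall t, 0 <= phi t - integrand 1 h t).
  { intros t. rewrite q_eq. pose proof (Qt_range (t + h)). pose proof (phi_pos t). nra. }
  specialize (H Hq ltac:(lra)).
  assert (RInt (fun _ => phi (h / 2 + 1) ^ 2) (- h / 2 - 1) (- h / 2) <= RInt (fun t => phi t - integrand 1 h t) (- h / 2 - 1) (- h / 2)).
  { apply RInt_le. lra. apply ex_RInt_cont; intros; apply cont_const.
    apply ex_RInt_cont. intros; apply cont_plus. apply phi_cont. apply cont_opp. apply integrand_cont.
    intros t Ht. rewrite q_eq.
    assert (phi (h / 2 + 1) <= Qt (t + h)).
    { eapply Rle_trans. 2: apply (Qt_anti (t + h) (h / 2)). apply Qt_lower. lra. lra. }
    assert (phi (h / 2 + 1) <= phi t).
    { apply phi_le. apply Rabs_le. lra. }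
    pose proof (phi_pos (h / 2 + 1)). simpl. nra. }
  rewrite RInt_const in H0. unfold scal in H0; simpl in H0; unfold mult in H0; simpl in H0.
  replace (- h / 2 - (- h / 2 - 1)) with 1 in H0 by field. lra.
Qed.

Lemma q_upper h t : 0 <= h ->
  Qt (t + h) * phi t <= exp (- h ^ 2 / 4) * phi (t + h / 2) + exp (- h ^ 2 / 2) * phi (t + h).
Proof.
  intros Hh.
  pose proof (phi_pos t). pose proof (phi_pos (t + h)). pose proof (phi_pos (t + h / 2)).
  pose proof (exp_pos (- h ^ 2 / 4)). pose proof (exp_pos (- h ^ 2 / 2)).
  assert (Hc : 0 < / sqrt (2 * PI)) by (apply Rinv_0_lt_compat, sq2PI_pos).
  destruct (Rle_lt_dec 0 (t + h)).
  - destruct (Qt_bounds_pos (t + h) r) as [_ HQ].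
    assert (exp (- (t + h) ^ 2 / 2) * phi t <= exp (- h ^ 2 / 4) * phi (t + h / 2)).
    { unfold phi, Rdiv. rewrite <- !Rmult_assoc. apply Rmult_le_compat_r. lra.
      rewrite <- !exp_plus. apply exp_le_exp. pose proof (pow2_ge_0 (t + h * / 2)). nra. }
    nra.
  - assert (Qt (t + h) <= 1) by apply Qt_range.
    assert (phi t <= exp (- h ^ 2 / 2) * phi (t + h)).
    { unfold phi, Rdiv. rewrite <- !Rmult_assoc. apply Rmult_le_compat_r. lra.
      rewrite <- !exp_plus. apply exp_le_exp. nra. }
    pose proof (Qt_range (t + h)). nra.
Qed.

Lemma F_lower h : 0 <= h -> 1 - (exp (- h ^ 2 / 4) + exp (- h ^ 2 / 2)) <= integral_R (integrand 1 h).
Proof.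
  intros Hh.
  assert (HI : IntR (fun t => exp (- h ^ 2 / 4) * phi (t + h / 2) + exp (- h ^ 2 / 2) * phi (t + h))
                    (exp (- h ^ 2 / 4) * 1 + exp (- h ^ 2 / 2) * 1)).
  { apply IntR_plus; apply IntR_scal; apply IntR_shift; apply IntR_phi. }
  assert (H := IntR_le _ _ _ _ (IntR_q h) HI).
  assert (1 - integral_R (integrand 1 h) <= exp (- h ^ 2 / 4) * 1 + exp (- h ^ 2 / 2) * 1).
  { apply H. intros t. rewrite q_eq. apply q_upper. auto. }
  lra.
Qed.

Lemma bernoulli (y : R) (k : nat) : 0 <= y <= 1 -> 1 - INR k * y <= (1 - y) ^ k.
Proof.
  intros Hy. induction k.
  - simpl. lra.
  - rewrite S_INR. simpl. assert (0 <= (1 - y) ^ k) by (apply pow_le; lra).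
    assert (0 <= INR k) by apply pos_INR. nra.
Qed.

Lemma pow_exp_le (y : R) (k : nat) : 0 <= y <= 1 -> (1 - y) ^ k <= exp (- (INR k * y)).
Proof.
  intros Hy. induction k.
  - simpl. replace (- (0 * y)) with 0 by ring. rewrite exp_0. lra.
  - rewrite S_INR. simpl. replace (- ((INR k + 1) * y)) with (- y + - (INR k * y)) by ring.
    rewrite exp_plus. apply Rmult_le_compat. lra. apply pow_le; lra.
    pose proof (exp_ineq1_le (- y)). lra. auto.
Qed.

Lemma m_lower a : 0 <= a -> 1 - 2 * exp (- a ^ 2 / 2) <= prim phi a - prim phi (- a).
Proof.
  intros Ha. rewrite prim_phi_odd. destruct (Qt_bounds_pos a Ha). unfold Qt in *. lra.
Qed.

Section Gen.
Variable p : R.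
Hypothesis Hp : 0 < p < 1.

Lemma h1_upper_gen k h1k x a : (1 <= k)%nat -> integral_R (integrand k h1k) = p ->
  0 <= x -> 0 <= a -> INR k * exp (- x ^ 2 / 2) <= (1 - p) / 4 -> exp (- a ^ 2 / 2) <= (1 - p) / 4 ->
  h1k < x + a.
Proof.
  intros Hk HG Hx Ha Hxk Ha2.
  destruct (Rlt_or_le h1k (x + a)) as [H|H]. auto. exfalso.
  pose proof (Gk_mono k _ _ H). rewrite HG in H0.
  pose proof (Gk_lower k (x + a) a Ha). replace (x + a - a) with x in H1 by ring.
  pose proof (m_lower a Ha).
  destruct (Qt_bounds_pos x Hx) as [Q1 Q2]. pose proof (Qt_range x).
  assert (HB := bernoulli (Qt x) k H3). rewrite <- Phi_Qt in HB.
  assert (INR k * Qt x <= (1 - p) / 4).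
  { eapply Rle_trans. 2: apply Hxk. apply Rmult_le_compat_l. apply pos_INR. auto. }
  assert (0 <= Phi x ^ k) by (apply pow_le; apply Phi_range).
  assert ((3 + p) / 4 * ((1 + p) / 2) <= Phi x ^ k * (prim phi a - prim phi (- a))).
  { apply Rmult_le_compat; lra. }
  nra.
Qed.

Lemma h1_lower_gen k h1k x : (1 <= k)%nat -> integral_R (integrand k h1k) = p ->
  0 <= x -> ln (2 / p) < INR k * phi (x + 1) -> x - (1 / 2 + ln (2 / p)) < h1k.
Proof.
  intros Hk HG Hx Hxk.
  destruct (Rlt_or_le (x - (1 / 2 + ln (2 / p))) h1k) as [H|H]. auto. exfalso.
  pose proof (Gk_mono k _ _ H). rewrite HG in H0.
  pose proof (Gk_upper k (x - (1 / 2 + ln (2 / p))) (1 / 2 + ln (2 / p))).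
  replace (x - (1 / 2 + ln (2 / p)) + (1 / 2 + ln (2 / p))) with x in H1 by ring.
  replace (1 / 2 - (1 / 2 + ln (2 / p))) with (- ln (2 / p)) in H1 by ring.
  assert (E : exp (- ln (2 / p)) = p / 2).
  { rewrite exp_Ropp, exp_ln. field. lra. apply Rdiv_lt_0_compat; lra. }
  rewrite E in H1.
  pose proof (Qt_range x). rewrite Phi_Qt in H1.
  pose proof (pow_exp_le (Qt x) k H2).
  assert (exp (- (INR k * Qt x)) < p / 2).
  { rewrite <- E. apply exp_increasing. pose proof (Qt_lower x Hx).
    assert (INR k * phi (x + 1) <= INR k * Qt x) by (apply Rmult_le_compat_l; auto; apply pos_INR).
    lra. }
  lra.
Qed.

Lemma F_nonneg h : 0 <= integral_R (integrand 1 h).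
Proof. apply (IntR_nonneg _ _ (IntR_integrand 1 h)). apply integrand_bounds. Qed.

Lemma h2_upper_gen k h2k h : (1 <= k)%nat -> integral_R (integrand 1 h2k) ^ k = p ->
  0 <= h -> 2 * INR k * exp (- h ^ 2 / 4) <= (1 - p) / 2 -> h2k < h.
Proof.
  intros Hk HG Hh Hhk.
  destruct (Rlt_or_le h2k h) as [H|H]. auto. exfalso.
  pose proof (Gk_mono 1 _ _ H).
  assert (integral_R (integrand 1 h) ^ k <= p).
  { rewrite <- HG. apply pow_incr. split. apply F_nonneg. auto. }
  pose proof (F_lower h Hh).
  assert (exp (- h ^ 2 / 2) <= exp (- h ^ 2 / 4)) by (apply exp_le_exp; nra).
  assert (1 <= INR k) by (replace 1 with (INR 1) by reflexivity; apply le_INR; auto).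
  pose proof (exp_pos (- h ^ 2 / 4)). pose proof (exp_pos (- h ^ 2 / 2)).
  assert (Hy : 0 <= 2 * exp (- h ^ 2 / 4) <= 1) by nra.
  pose proof (bernoulli _ k Hy).
  assert ((1 - 2 * exp (- h ^ 2 / 4)) ^ k <= integral_R (integrand 1 h) ^ k).
  { apply pow_incr. split. lra. lra. }
  nra.
Qed.

Lemma h2_lower_gen k h2k h : (1 <= k)%nat -> integral_R (integrand 1 h2k) ^ k = p ->
  0 <= h -> ln (/ p) < INR k * phi (h / 2 + 1) ^ 2 -> h < h2k.
Proof.
  intros Hk HG Hh Hhk.
  destruct (Rlt_or_le h h2k) as [H|H]. auto. exfalso.
  pose proof (Gk_mono 1 _ _ H).
  assert (p <= integral_R (integrand 1 h) ^ k).
  { rewrite <- HG. apply pow_incr. split. apply F_nonneg. auto. }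
  pose proof (F_upper h Hh).
  pose proof (phi_pos (h / 2 + 1)).
  assert (phi (h / 2 + 1) <= 1).
  { unfold phi. apply (Rmult_le_reg_r (sqrt (2 * PI))). apply sq2PI_pos.
    unfold Rdiv. rewrite Rmult_assoc, Rinv_l. 2: pose proof sq2PI_pos; lra.
    rewrite Rmult_1_l, Rmult_1_r. apply Rle_trans with 1.
    assert (HE : exp (- (h / 2 + 1) ^ 2 / 2) <= exp 0) by (apply exp_le_exp; pose proof (pow2_ge_0 (h / 2 + 1)); lra).
    rewrite exp_0 in HE. exact HE.
    rewrite <- sqrt_1. apply sqrt_le_1_alt. pose proof PI2_3_2. lra. }
  assert (Hy : 0 <= phi (h / 2 + 1) ^ 2 <= 1) by nra.
  pose proof (pow_exp_le _ k Hy).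
  assert (integral_R (integrand 1 h) ^ k <= (1 - phi (h / 2 + 1) ^ 2) ^ k).
  { apply pow_incr. split. apply F_nonneg. auto. }
  assert (exp (- (INR k * phi (h / 2 + 1) ^ 2)) < p).
  { replace p with (exp (- ln (/ p))). apply exp_increasing. lra.
    rewrite exp_Ropp, exp_ln. field. lra. apply Rinv_0_lt_compat; lra. }
  lra.
Qed.

End Gen.

Lemma sqrt_sub_le x y : 0 <= x -> 0 <= y -> sqrt x <= sqrt y + sqrt (Rabs (x - y)).
Proof.
  intros Hx Hy.
  pose proof (sqrt_pos y). pose proof (sqrt_pos (Rabs (x - y))).
  pose proof (pow2_sqrt y Hy). pose proof (pow2_sqrt (Rabs (x - y)) (Rabs_pos _)).
  assert (x <= (sqrt y + sqrt (Rabs (x - y))) ^ 2).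
  { pose proof (Rle_abs (x - y)). nra. }
  rewrite <- (sqrt_pow2 (sqrt y + sqrt (Rabs (x - y)))) by lra.
  apply sqrt_le_1_alt. auto.
Qed.

Lemma sqrt_near u C : 0 <= u -> 0 <= u + C -> Rabs (sqrt (u + C) - sqrt u) <= sqrt (Rabs C).
Proof.
  intros Hu HuC. apply Rabs_le. split.
  - pose proof (sqrt_sub_le u (u + C) Hu HuC). replace (u - (u + C)) with (- C) in H by ring.
    rewrite Rabs_Ropp in H. lra.
  - pose proof (sqrt_sub_le (u + C) u HuC Hu). replace (u + C - u) with C in H by ring. lra.
Qed.

Lemma sqrt_4S2 S : 0 <= S -> sqrt (4 * S ^ 2) = 2 * S.
Proof. intros H. replace (4 * S ^ 2) with ((2 * S) ^ 2) by ring. apply sqrt_pow2. lra. Qed.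

Lemma sqrt2_mul x : 0 <= x -> sqrt 2 * sqrt x = sqrt (2 * x).
Proof. intros H. rewrite sqrt_mult; lra. Qed.

Lemma exp_S2 k S : (1 <= k)%nat -> 0 <= S -> S ^ 2 = ln (INR k) -> forall c, INR k * exp (- (S ^ 2 + c)) = exp (- c).
Proof.
  intros Hk HS E c. assert (0 < INR k) by (apply lt_0_INR; lia).
  replace (- (S ^ 2 + c)) with (- S ^ 2 + - c) by ring. rewrite exp_plus, E.
  rewrite exp_Ropp, exp_ln by auto. field. lra.
Qed.

Section Bounds.
Variable p : R.
Hypothesis Hp : 0 < p < 1.

Definition cst1 := ln (4 / (1 - p)).
Lemma c1_pos : 0 < cst1.
Proof. unfold cst1. rewrite <- ln_1. apply ln_increasing. lra.
  apply (Rmult_lt_reg_r (1 - p)). lra. unfold Rdiv. rewrite Rmult_assoc, Rinv_l; lra. Qed.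
Lemma exp_c1 : exp (- cst1) = (1 - p) / 4.
Proof. unfold cst1. rewrite exp_Ropp, exp_ln. field. lra. apply Rdiv_lt_0_compat; lra. Qed.

Lemma bound1 k h1k S : (1 <= k)%nat -> integral_R (integrand k h1k) = p ->
  0 <= S -> S ^ 2 = ln (INR k) ->
  sqrt 2 * h1k <= 2 * S + sqrt (4 * cst1) + sqrt 2 * sqrt (2 * cst1).
Proof.
  intros Hk HG HS E. pose proof c1_pos. pose proof (pow2_ge_0 S) as HS2.
  set (x1 := sqrt (2 * S ^ 2 + 2 * cst1)). set (a1 := sqrt (2 * cst1)).
  assert (Hx1 : x1 ^ 2 = 2 * S ^ 2 + 2 * cst1) by (apply pow2_sqrt; nra).
  assert (Ha1 : a1 ^ 2 = 2 * cst1) by (apply pow2_sqrt; nra).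
  assert (h1k < x1 + a1).
  { apply (h1_upper_gen p Hp k); auto. apply sqrt_pos. apply sqrt_pos.
    - replace (- x1 ^ 2 / 2) with (- (S ^ 2 + cst1)) by (rewrite Hx1; field).
      rewrite (exp_S2 k S Hk HS E). rewrite exp_c1. lra.
    - replace (- a1 ^ 2 / 2) with (- cst1) by (rewrite Ha1; field). rewrite exp_c1. lra. }
  assert (sqrt 2 * x1 = sqrt (4 * S ^ 2 + 4 * cst1)).
  { unfold x1. rewrite sqrt2_mul by nra. f_equal. ring. }
  pose proof (sqrt_near (4 * S ^ 2) (4 * cst1) ltac:(nra) ltac:(nra)).
  rewrite sqrt_4S2 in H2 by auto. rewrite (Rabs_pos_eq (4 * cst1)) in H2 by lra.
  apply Rabs_le_between in H2.
  assert (0 < sqrt 2) by (apply sqrt_lt_R0; lra).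
  assert (sqrt 2 * h1k <= sqrt 2 * (x1 + a1)) by (apply Rmult_le_compat_l; lra).
  fold a1. lra.
Qed.

Definition K0 := sqrt (2 * PI) * (ln (2 / p) + 1).
Definition cst2 := ln K0.
Lemma ln2p_pos : 0 < ln (2 / p).
Proof. rewrite <- ln_1. apply ln_increasing. lra.
  apply (Rmult_lt_reg_r p). lra. unfold Rdiv. rewrite Rmult_assoc, Rinv_l; lra. Qed.
Lemma exp_c2 : exp cst2 = K0.
Proof. unfold cst2. apply exp_ln. unfold K0. pose proof sq2PI_pos. pose proof ln2p_pos. nra. Qed.

Lemma bound2 k h1k S : (1 <= k)%nat -> integral_R (integrand k h1k) = p ->
  0 <= S -> S ^ 2 = ln (INR k) -> 1 <= 2 * S ^ 2 - 2 * cst2 ->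
  2 * S - sqrt (Rabs (- (4 * cst2))) - sqrt 2 - sqrt 2 * (1 / 2 + ln (2 / p)) <= sqrt 2 * h1k.
Proof.
  intros Hk HG HS E HT. pose proof (pow2_ge_0 S) as HS2.
  set (y := sqrt (2 * S ^ 2 - 2 * cst2)).
  assert (Hy : y ^ 2 = 2 * S ^ 2 - 2 * cst2) by (apply pow2_sqrt; lra).
  assert (Hy1 : 1 <= y).
  { unfold y. rewrite <- sqrt_1. apply sqrt_le_1_alt. lra. }
  assert (y - 1 - (1 / 2 + ln (2 / p)) < h1k).
  { apply (h1_lower_gen p Hp k); auto. lra.
    replace (y - 1 + 1) with y by ring. unfold phi.
    replace (- y ^ 2 / 2) with (- (S ^ 2 + - cst2)) by (rewrite Hy; field).
    unfold Rdiv. rewrite <- Rmult_assoc. rewrite (exp_S2 k S Hk HS E).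
    rewrite Ropp_involutive, exp_c2. unfold K0. pose proof sq2PI_pos.
    field_simplify. lra. lra. }
  assert (sqrt 2 * y = sqrt (4 * S ^ 2 - 4 * cst2)).
  { unfold y. rewrite sqrt2_mul by lra. f_equal. ring. }
  pose proof (sqrt_near (4 * S ^ 2) (- (4 * cst2)) ltac:(nra) ltac:(lra)).
  rewrite sqrt_4S2 in H1 by auto. apply Rabs_le_between in H1.
  replace (4 * S ^ 2 + - (4 * cst2)) with (4 * S ^ 2 - 4 * cst2) in H1 by ring.
  assert (0 < sqrt 2) by (apply sqrt_lt_R0; lra).
  assert (sqrt 2 * (y - 1 - (1 / 2 + ln (2 / p))) <= sqrt 2 * h1k) by (apply Rmult_le_compat_l; lra).
  lra.
Qed.

Lemma bound3 k h2k S : (1 <= k)%nat -> integral_R (integrand 1 h2k) ^ k = p ->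
  0 <= S -> S ^ 2 = ln (INR k) -> h2k <= 2 * S + sqrt (4 * cst1).
Proof.
  intros Hk HG HS E. pose proof c1_pos. pose proof (pow2_ge_0 S) as HS2.
  set (h := sqrt (4 * S ^ 2 + 4 * cst1)).
  assert (Hh : h ^ 2 = 4 * S ^ 2 + 4 * cst1) by (apply pow2_sqrt; nra).
  assert (h2k < h).
  { apply (h2_upper_gen p Hp k); auto. apply sqrt_pos.
    replace (- h ^ 2 / 4) with (- (S ^ 2 + cst1)) by (rewrite Hh; field).
    rewrite Rmult_assoc, (exp_S2 k S Hk HS E), exp_c1. lra. }
  pose proof (sqrt_near (4 * S ^ 2) (4 * cst1) ltac:(nra) ltac:(nra)).
  rewrite sqrt_4S2 in H1 by auto. rewrite (Rabs_pos_eq (4 * cst1)) in H1 by lra.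
  apply Rabs_le_between in H1. fold h in H1. lra.
Qed.

Definition cst4 := ln (2 * PI * (ln (/ p) + 1)).
Lemma lninvp_pos : 0 < ln (/ p).
Proof. rewrite <- ln_1. apply ln_increasing. lra.
  apply (Rmult_lt_reg_r p). lra. rewrite Rinv_l; lra. Qed.
Lemma exp_c4 : exp cst4 = 2 * PI * (ln (/ p) + 1).
Proof. unfold cst4. apply exp_ln. pose proof Rgt_2PI_0. pose proof lninvp_pos. nra. Qed.

Lemma bound4 k h2k S : (1 <= k)%nat -> integral_R (integrand 1 h2k) ^ k = p ->
  0 <= S -> S ^ 2 = ln (INR k) -> 1 <= S ^ 2 - cst4 ->
  2 * S - sqrt (Rabs (- (4 * cst4))) - 2 <= h2k.
Proof.
  intros Hk HG HS E HT. pose proof (pow2_ge_0 S) as HS2.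
  set (y := sqrt (S ^ 2 - cst4)).
  assert (Hy : y ^ 2 = S ^ 2 - cst4) by (apply pow2_sqrt; lra).
  assert (Hy1 : 1 <= y).
  { unfold y. rewrite <- sqrt_1. apply sqrt_le_1_alt. lra. }
  assert (2 * (y - 1) < h2k).
  { apply (h2_lower_gen p Hp k); auto. lra.
    replace (2 * (y - 1) / 2 + 1) with y by field. unfold phi.
    assert (Ec : sqrt (2 * PI) ^ 2 = 2 * PI) by (apply pow2_sqrt; pose proof Rgt_2PI_0; lra).
    replace ((exp (- y ^ 2 / 2) / sqrt (2 * PI)) ^ 2) with (exp (- (S ^ 2 + - cst4)) / (2 * PI)).
    2:{ pose proof sq2PI_pos. set (s := sqrt (2 * PI)) in *. rewrite <- Ec.
        replace (- (S ^ 2 + - cst4)) with (- y ^ 2 / 2 + - y ^ 2 / 2) by (rewrite Hy; field).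
        rewrite exp_plus. field. lra. }
    unfold Rdiv. rewrite <- Rmult_assoc. rewrite (exp_S2 k S Hk HS E).
    rewrite Ropp_involutive, exp_c4. pose proof Rgt_2PI_0. field_simplify. lra. lra. }
  assert (2 * y = sqrt (4 * S ^ 2 - 4 * cst4)).
  { unfold y. replace (4 * S ^ 2 - 4 * cst4) with (2 ^ 2 * (S ^ 2 - cst4)) by ring.
    rewrite sqrt_mult by nra. rewrite sqrt_pow2 by lra. auto. }
  pose proof (sqrt_near (4 * S ^ 2) (- (4 * cst4)) ltac:(nra) ltac:(lra)).
  rewrite sqrt_4S2 in H1 by auto. apply Rabs_le_between in H1.
  replace (4 * S ^ 2 + - (4 * cst4)) with (4 * S ^ 2 - 4 * cst4) in H1 by ring.
  lra.
Qed.

End Bounds.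

Lemma eventually_S : forall T, exists N, forall k, (N <= k)%nat -> (2 <= k)%nat /\ T <= sqrt (ln (INR k)).
Proof.
  intros T. set (T' := Rmax T 1).
  assert (H := is_lim_seq_INR). apply is_lim_seq_spec in H. destruct (H (exp (T' ^ 2))) as [N HN].
  exists N. intros k Hk. specialize (HN k Hk).
  assert (1 <= T') by apply Rmax_r. assert (T <= T') by apply Rmax_l.
  assert (1 < exp (T' ^ 2)). { rewrite <- exp_0. apply exp_increasing. nra. }
  split.
  - apply INR_lt. simpl. lra.
  - apply Rle_trans with T'. auto.
    rewrite <- (sqrt_pow2 T') by lra. apply sqrt_le_1_alt.
    rewrite <- (ln_exp (T' ^ 2)). left. apply ln_increasing. apply exp_pos. auto.
Qed.

Lemma ratio (x s : nat -> R) : (forall M, exists N, forall k, (N <= k)%nat -> M < s k) ->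
  (exists N D, forall k, (N <= k)%nat -> Rabs (x k - s k) <= D) ->
  is_lim_seq (fun k => x k / s k) 1.
Proof.
  intros Hs [N [D HD]]. apply is_lim_seq_spec. intros eps. pose proof (cond_pos eps).
  destruct (Hs (Rabs D / eps + 1)) as [N2 HN2].
  exists (max N N2). intros k Hk.
  assert (Hk1 : (N <= k)%nat) by lia. assert (Hk2 : (N2 <= k)%nat) by lia.
  specialize (HD k Hk1). specialize (HN2 k Hk2).
  assert (0 <= Rabs D / eps) by (apply Rdiv_le_0_compat; [apply Rabs_pos | lra]).
  assert (0 < s k) by lra.
  replace (x k / s k - 1) with ((x k - s k) / s k) by (field; lra).
  unfold Rdiv. rewrite Rabs_mult, (Rabs_pos_eq (/ s k)) by (apply Rlt_le, Rinv_0_lt_compat; lra).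
  apply (Rmult_lt_reg_r (s k)). lra. rewrite Rmult_assoc, Rinv_l, Rmult_1_r by lra.
  assert (Rabs D < eps * s k).
  { assert (Rabs D / eps < s k) by lra.
    apply (Rmult_lt_compat_l eps) in H2; auto. unfold Rdiv in H2.
    replace (eps * (Rabs D * / eps)) with (Rabs D) in H2 by (field; lra). lra. }
  pose proof (Rle_abs D). lra.
Qed.

Lemma main_bounds (p : R) (h1 h2 : nat -> R) : 0 < p < 1 ->
  (forall k : nat, (1 <= k)%nat -> integral_R (integrand k (h1 k)) = p) ->
  (forall k : nat, (1 <= k)%nat -> integral_R (integrand 1 (h2 k)) ^ k = p) ->
  exists N D, forall k, (N <= k)%nat ->
    Rabs (sqrt 2 * h1 k - 2 * sqrt (ln (INR k))) <= D /\
    Rabs (h2 k - 2 * sqrt (ln (INR k))) <= D /\ 1 <= sqrt (ln (INR k)).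
Proof.
  intros Hp H1 H2.
  destruct (eventually_S (1 + Rabs (cst2 p) + Rabs (cst4 p))) as [N HN].
  pose proof (c1_pos p Hp).
  set (D := sqrt (4 * cst1 p) + sqrt 2 * sqrt (2 * cst1 p) + sqrt (Rabs (- (4 * cst2 p))) + sqrt 2
            + sqrt 2 * (1 / 2 + ln (2 / p)) + sqrt (Rabs (- (4 * cst4 p))) + 2).
  exists N, D. intros k Hk. destruct (HN k Hk) as [Hk2 HS].
  set (S := sqrt (ln (INR k))) in *.
  assert (Hk1 : (1 <= k)%nat) by lia.
  assert (HL : 0 <= ln (INR k)).
  { rewrite <- ln_1. destruct (Req_dec (INR k) 1) as [E|E]. rewrite E; lra.
    left. apply ln_increasing. lra. assert (INR 2 <= INR k) by (apply le_INR; auto). simpl in H0. lra. }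
  assert (E : S ^ 2 = ln (INR k)) by (apply pow2_sqrt; auto).
  assert (HS0 : 0 <= S) by apply sqrt_pos.
  pose proof (Rabs_pos (cst2 p)). pose proof (Rabs_pos (cst4 p)).
  pose proof (Rle_abs (cst2 p)). pose proof (Rle_abs (cst4 p)).
  assert (S <= S ^ 2) by nra.
  pose proof (bound1 p Hp k (h1 k) S Hk1 (H1 k Hk1) HS0 E).
  pose proof (bound2 p Hp k (h1 k) S Hk1 (H1 k Hk1) HS0 E ltac:(lra)).
  pose proof (bound3 p Hp k (h2 k) S Hk1 (H2 k Hk1) HS0 E).
  pose proof (bound4 p Hp k (h2 k) S Hk1 (H2 k Hk1) HS0 E ltac:(lra)).
  assert (0 <= sqrt (4 * cst1 p)) by apply sqrt_pos.
  assert (0 <= sqrt 2 * sqrt (2 * cst1 p)) by (apply Rmult_le_pos; apply sqrt_pos).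
  assert (0 <= sqrt (Rabs (- (4 * cst2 p)))) by apply sqrt_pos.
  assert (0 <= sqrt 2) by apply sqrt_pos.
  assert (0 <= sqrt 2 * (1 / 2 + ln (2 / p))) by (apply Rmult_le_pos; [apply sqrt_pos| pose proof (ln2p_pos p Hp); lra]).
  assert (0 <= sqrt (Rabs (- (4 * cst4 p)))) by apply sqrt_pos.
  split; [|split]; try (apply Rabs_le; unfold D; lra). lra.
Qed.

Theorem theorem6 (p : R) (h1 h2 : nat -> R) :
  0 < p < 1 ->
  (forall k : nat, (1 <= k)%nat ->
     integral_R (fun t => Phi (t + h1 k) ^ k * phi t) = p) ->
  (forall k : nat, (1 <= k)%nat ->
     (integral_R (fun t => Phi (t + h2 k) * phi t)) ^ k = p) ->
  is_lim_seq (fun k => h2 k / (sqrt 2 * h1 k)) 1 /\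
  is_lim_seq (fun k => sqrt 2 * h1 k / (2 * sqrt (ln (INR k)))) 1.
Proof.
  intros Hp H1 H2.
  assert (H1' : forall k : nat, (1 <= k)%nat -> integral_R (integrand k (h1 k)) = p).
  { intros k Hk. exact (H1 k Hk). }
  assert (H2' : forall k : nat, (1 <= k)%nat -> integral_R (integrand 1 (h2 k)) ^ k = p).
  { intros k Hk. replace (integrand 1 (h2 k)) with (fun t => Phi (t + h2 k) * phi t).
    exact (H2 k Hk). apply functional_extensionality. intros t. unfold integrand. ring. }
  destruct (main_bounds p h1 h2 Hp H1' H2') as [N [D HB]].
  assert (HD : 0 <= D). { destruct (HB N (Nat.le_refl N)) as [A _]. pose proof (Rabs_pos (sqrt 2 * h1 N - 2 * sqrt (ln (INR N)))). lra. }
  split.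
  - apply (ratio h2 (fun k => sqrt 2 * h1 k)).
    + intros M. destruct (eventually_S ((M + D) / 2 + 1)) as [N2 HN2]. exists (max N N2). intros k Hk.
      destruct (HN2 k ltac:(lia)) as [_ HS]. destruct (HB k ltac:(lia)) as [A _].
      apply Rabs_le_between in A. lra.
    + exists N, (2 * D). intros k Hk. destruct (HB k Hk) as [A [B _]].
      apply Rabs_le_between in A. apply Rabs_le_between in B. apply Rabs_le. lra.
  - apply (ratio (fun k => sqrt 2 * h1 k) (fun k => 2 * sqrt (ln (INR k)))).
    + intros M. destruct (eventually_S (M / 2 + 1)) as [N2 HN2]. exists N2. intros k Hk.
      destruct (HN2 k Hk) as [_ HS]. lra.
    + exists N, D. intros k Hk. apply HB. auto.
Qed.
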